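(* Let $n\ge1$, $X=\{1,\dots,n\}$, $\mathcal{A}$ the algebra of all functions $X\to\mathbb{R}$ with pointwise operations, $\sigma:X\to X$ a bijection, $\tilde{\sigma}(f)=f\circ\sigma^{-1}$, and $\Delta$ a $\tilde{\sigma}$-derivation on $\mathcal{A}$. If an element $\sum_{k=0}^m f_kx^k$ of degree $m$ (so $f_m\neq0$) of the Ore extension $\mathcal{A}[x,\tilde{\sigma},\Delta]$ belongs to the centralizer of $\mathcal{A}$, then $f_m=0$ on $Sep^m(X)$.
   Context: A $\tilde{\sigma}$-derivation is an $\mathbb{R}$-linear map $\Delta:\mathcal{A}\to\mathcal{A}$ with $\Delta(fg)=\tilde{\sigma}(f)\Delta(g)+\Delta(f)g$. The Ore extension $\mathcal{A}[x,\tilde{\sigma},\Delta]$ is the ring generated by $\mathcal{A}$ and an element $x$ such that $1,x,x^2,\dots$ form a basis as a left $\mathcal{A}$-module and $xf=\tilde{\sigma}(f)x+\Delta(f)$ for all $f\in\mathcal{A}$. The centralizer of $\mathcal{A}$ is the set of elements commuting with every element of $\mathcal{A}$. $Sep^m(X)=\{p\in X:\sigma^m(p)\neq p\}$. *)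

(* Defs.v *)
From HB Require Import structures.
From mathcomp Require Import all_boot all_order all_algebra all_fingroup.
From mathcomp Require Import reals.
Set Implicit Arguments. Unset Strict Implicit. Unset Printing Implicit Defensive.
Import Order.TTheory GRing.Theory Num.Theory.
Local Open Scope ring_scope.

Definition Alg (R : realType) (n : nat) := 'I_n -> R.

Definition sigt (R : realType) (n : nat) (s : {perm 'I_n}) (f : Alg R n) : Alg R n :=
  fun p => f ((s^-1)%g p).

Definition is_sigma_derivation (R : realType) (n : nat) (s : {perm 'I_n})
    (D : Alg R n -> Alg R n) : Prop :=
  [/\ forall f g : Alg R n, D (fun p => f p + g p) = (fun p => D f p + D g p),
      forall (c : R) (f : Alg R n), D (fun p => c * f p) = (fun p => c * D f p)
    & forall f g : Alg R n,
        D (fun p => f p * g p) = (fun p => sigt s f p * D g p + D f p * g p)].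

(* Elements of the Ore extension A[x, sigma~, Delta] are represented by their
   coefficient sequence c : nat -> A (finitely supported), standing for
   sum_j c j x^j.  Left multiplication by x:
     x * (c x^j) = sigma~(c) x^{j+1} + Delta(c) x^j. *)
Definition ore_mulx (R : realType) (n : nat) (s : {perm 'I_n})
    (D : Alg R n -> Alg R n) (c : nat -> Alg R n) : nat -> Alg R n :=
  fun i p => (match i with 0%N => 0 | i'.+1 => sigt s (c i') p end) + D (c i) p.

Definition ore_xpow_mul (R : realType) (n : nat) (s : {perm 'I_n})
    (D : Alg R n -> Alg R n) (k : nat) (g : Alg R n) : nat -> Alg R n :=
  iter k (ore_mulx s D) (fun i => if i == 0%N then g else (fun _ => 0)).

(* The element sum_{k=0}^m f_k x^k commutes with every g in A:
   coefficientwise, (sum_k f_k x^k) g = g (sum_k f_k x^k). *)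
Definition in_centralizer (R : realType) (n : nat) (s : {perm 'I_n})
    (D : Alg R n -> Alg R n) (m : nat) (f : nat -> Alg R n) : Prop :=
  forall (g : Alg R n) (i : nat) (p : 'I_n),
    \sum_(k < m.+1) f k p * ore_xpow_mul s D k g i p
    = (if (i <= m)%N then g p * f i p else 0).

Definition Sep (n : nat) (s : {perm 'I_n}) (m : nat) : {set 'I_n} :=
  [set p | (s ^+ m)%g p != p].

(* Main.v *)
Require Import Defs.
From HB Require Import structures.
From mathcomp Require Import all_boot all_order all_algebra all_fingroup.
From mathcomp Require Import reals.
From Stdlib Require Import FunctionalExtensionality.
Import Order.TTheory GRing.Theory Num.Theory.
Local Open Scope ring_scope.

Lemma D0 (R : realType) (n : nat) (s : {perm 'I_n})
    (D : Alg R n -> Alg R n) (hD : is_sigma_derivation s D) :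
  D (fun _ => 0) = (fun _ => 0).
Proof.
case: hD => _ hc _.
have := hc 0 (fun _ => 0).
have -> : (fun p : 'I_n => (0:R) * 0) = (fun _ => 0).
  by apply: functional_extensionality => p; rewrite mul0r.
move=> ->; apply: functional_extensionality => p; by rewrite mul0r.
Qed.

Lemma xpow_coef (R : realType) (n : nat) (s : {perm 'I_n})
    (D : Alg R n -> Alg R n) (hD : is_sigma_derivation s D) (g : Alg R n) k :
  (forall i, (k < i)%N -> ore_xpow_mul s D k g i = (fun _ => 0)) /\
  ore_xpow_mul s D k g k = iter k (sigt s) g.
Proof.
elim: k => [|k [IH1 IH2]].
  split; last by [].
  by case=> [|i] //.
have E : ore_xpow_mul s D k.+1 g = ore_mulx s D (ore_xpow_mul s D k g) by [].
split.
  move=> [|[|i]] // Hi; rewrite E; apply: functional_extensionality => p.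
  rewrite /ore_mulx IH1 // IH1; last by apply: ltn_trans Hi.
  by rewrite (@D0 _ _ _ _ hD) /sigt addr0.
rewrite E; apply: functional_extensionality => p.
rewrite /ore_mulx IH2 IH1 // (@D0 _ _ _ _ hD) addr0 /=. done.
Qed.

Lemma iter_sigt (R : realType) (n : nat) (s : {perm 'I_n}) (g : Alg R n) k p :
  iter k (sigt s) g p = g (((s^-1)^+k)%g p).
Proof.
elim: k p => [|k IH] p /=; first by rewrite expg0 perm1.
by rewrite /sigt IH expgS permM.
Qed.

Theorem theorem4 (R : realType) (n : nat) (hn : (0 < n)%N) (s : {perm 'I_n})
    (D : Alg R n -> Alg R n) (hD : is_sigma_derivation s D)
    (m : nat) (f : nat -> Alg R n)
    (hdeg : f m <> (fun _ => 0))
    (hcent : in_centralizer s D m f) :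
  forall p : 'I_n, p \in Sep s m -> f m p = 0.
Proof.
move=> p; rewrite inE => Hp.
pose g : Alg R n := fun q => if q == p then 1 else 0.
have := hcent g m p.
rewrite leqnn big_ord_recr /= big1; last first.
  move=> [k Hk] _ /=; have [H1 _] := @xpow_coef _ _ _ _ hD g k.
  by rewrite H1 // mulr0.
have [_ H2] := @xpow_coef _ _ _ _ hD g m.
rewrite H2 iter_sigt add0r /g eqxx mul1r.
have -> : (((s^-1)^+m)%g p == p) = false.
  apply/negbTE; apply: contra Hp => /eqP H.
  by rewrite -{1}H expgVn permKV.
by rewrite mulr0 => <-.
Qed.
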